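(* For every integer $t\ge 3$, $W(t-1)<t^{\frac{0.96}{\log\log t}}$, where $W(m)$ denotes the number of squarefree positive divisors of $m$ and $\log$ is the natural logarithm. *)

(* Defs.v *)
From mathcomp Require Import all_boot.
From Stdlib Require Import Reals.

Definition squarefree (n : nat) : bool :=
  (0 < n) && all (fun p => logn p n <= 1) (primes n).

Definition W (m : nat) : nat :=
  size [seq d <- divisors m | squarefree d].

(* Main.v *)
Require Import Defs.
From mathcomp Require Import all_boot.
From Stdlib Require Import Reals.
From Stdlib Require Import ZArith Lra.
From mathcomp Require Import zify.
Import ssrnat.
Open Scope Z_scope.
Definition ps : seq nat := [:: 2; 3; 5; 7; 11; 13; 17; 19; 23; 29; 31; 37; 41; 43; 47; 53; 59; 61; 67; 71; 73; 79; 83; 89; 97; 101; 103; 107; 109; 113; 127; 131; 137; 139; 149; 151; 157; 163; 167; 173; 179; 181; 191; 193; 197; 199; 211; 223; 227; 229; 233; 239; 241; 251; 257; 263; 269; 271; 277; 281]%nat.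
Definition As : list Z := (6931 :: 10985 :: 16093 :: 19457 :: 23976 :: 25646 :: 28327 :: 29439 :: 31348 :: 33665 :: 34331 :: 36099 :: 37125 :: 37601 :: 38489 :: 39690 :: 40761 :: 41094 :: 42031 :: 42611 :: 42888 :: 43677 :: 44170 :: 44867 :: 45727 :: 46131 :: 46327 :: 46707 :: 46892 :: 47252 :: 48418 :: 48728 :: 49175 :: 49320 :: 50013 :: 50147 :: 50536 :: 50910 :: 51152 :: 51505 :: 51845 :: 51956 :: 52493 :: 52597 :: 52802 :: 52902 :: 53487 :: 54039 :: 54217 :: 54304 :: 54477 :: 54731 :: 54814 :: 55220 :: 55456 :: 55686 :: 55911 :: 55985 :: 56204 :: 56347 :: nil)%Z.
Definition Cs : list Z := (0 :: 0 :: 5832 :: 12242 :: 16767 :: 20473 :: 23336 :: 25765 :: 27788 :: 29570 :: 31186 :: 32603 :: 33904 :: 35086 :: 36156 :: 37144 :: 38071 :: 38941 :: 39748 :: 40511 :: 41229 :: 41904 :: 42548 :: 43159 :: 43744 :: 44307 :: 44845 :: 45357 :: 45848 :: 46319 :: 46771 :: 47215 :: 47642 :: 48056 :: 48454 :: 48843 :: 49218 :: 49582 :: 49936 :: 50280 :: 50614 :: 50940 :: 51256 :: 51566 :: 51867 :: 52160 :: 52446 :: 52727 :: 53002 :: 53272 :: 53534 :: 53791 :: 54043 :: 54289 :: 54530 :: 54767 :: 55000 :: 55228 :: 55451 :: 55671 :: nil)%Z.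
Definition DD : Z := 10000.
Definition MM : nat := 64.
Definition P2 : Z := 4294967296.
Definition g (i : nat) : nat := nth (3 * (i.-1))%nat ps i.
Fixpoint sumA (k : nat) : Z := match k with O => 0 | S k' => sumA k' + nth 0 As k' end.
Fixpoint powU (x : Z) (k : nat) : Z :=
  match k with O => P2 | S k' => Z.shiftr (powU x k' * x + (P2 - 1)) 32 end.
Fixpoint powL (x : Z) (k : nat) : Z :=
  match k with O => P2 | S k' => Z.shiftr (powL x k' * x) 32 end.
Definition AU (a : Z) : Z := 2 * Z.of_nat MM * DD + a.
Definition CU (a : Z) : Z := 2 * Z.of_nat MM * DD - a.
Definition xU (a : Z) : Z := (AU a * P2 + CU a - 1) / CU a.
Definition okU (a p : Z) : bool :=
  (0 <=? a) && (a <? 2 * Z.of_nat MM * DD) && (0 <=? xU a) &&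
  (AU a * P2 <=? xU a * CU a) && (powU (xU a) MM <=? p * P2).
Definition denL : Z := 2 * DD * DD * Z.of_nat MM * Z.of_nat MM.
Definition numL (a : Z) : Z := denL + 2 * a * DD * Z.of_nat MM + a * a.
Definition xL (a : Z) : Z := (numL a * P2) / denL.
Definition okL (a B E : Z) : bool :=
  (0 <=? a) && (0 <? E) && (0 <=? xL a) && (xL a * denL <=? numL a * P2) &&
  (B * P2 <? E * powL (xL a) MM).
Definition checkK (k : nat) : bool :=
  let S := sumA k in let c := nth 0 Cs k in
  okL c S DD && (100 * Z.of_nat k * 6932 * c <? 96 * S * DD) && (100 * Z.of_nat k * 6932 <=? 96 * S).
Lemma checkU_ok : all (fun i => okU (nth 0%Z As i) (Z.of_nat (g i))) (iota 0 60) = true.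
Proof. vm_compute. reflexivity. Qed.
Lemma checkKs_ok : all checkK (iota 4 56) = true. Proof. vm_compute. reflexivity. Qed.
Lemma ln2_ok : okL 6932 2 1 = true. Proof. vm_compute. reflexivity. Qed.
Lemma ok1 : okU 10985 3 = true. Proof. vm_compute. reflexivity. Qed.
Lemma ok2 : okL 11000 3 1 = true. Proof. vm_compute. reflexivity. Qed.
Lemma ok3 : okL 14120 41 10 = true. Proof. vm_compute. reflexivity. Qed.
Lemma ok4 : okU 40000 58 = true. Proof. vm_compute. reflexivity. Qed.
Lemma ok5 : okU 10500 3 = true. Proof. vm_compute. reflexivity. Qed.
Lemma ceil_div_ge (a q : Z) : 0 < q -> a <= q * ((a + q - 1) / q).
Proof.
move=> hq; have := Z.div_mod (a + q - 1) q ltac:(lia).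
have := Z.mod_pos_bound (a + q - 1) q hq. nia.
Qed.
Lemma powL_nonneg x k : 0 <= x -> 0 <= powL x k.
Proof.
move=> hx; elim: k => [|k IH] /=; first by rewrite /P2; lia.
rewrite Z.shiftr_div_pow2; last lia.
apply: Z.div_pos; [nia|lia].
Qed.
Close Scope Z_scope.

Lemma prod_lb (g : nat -> nat) (S : seq nat) :
  uniq S -> (forall i, count (fun s => s < g i) S <= i) ->
  \prod_(0 <= i < size S) g i <= \prod_(s <- S) s.
Proof.
move Hn: (size S) => n; elim: n S Hn => [|n IH] S Hn uS Hc.
  by case: S Hn uS Hc => // _ _ _; rewrite big_nil big_geq.
have : has (predC (fun s => s < g n)) S.
  rewrite has_count; have := count_predC (fun s => s < g n) S.
  have := Hc n; rewrite Hn; lia.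
move/hasP=> [x xS /= hx]; rewrite -leqNgt in hx.
have Hp := perm_to_rem xS.
rewrite (perm_big _ Hp) /= big_cons big_nat_recr //= mulnC.
apply: leq_mul => //.
apply: IH.
- by rewrite size_rem // Hn.
- exact: rem_uniq.
- move=> i; apply: leq_trans (Hc i).
  by rewrite count_rem leq_subr.
Qed.

Lemma sqf_prod (d : nat) : squarefree d -> d = \prod_(p <- primes d) p.
Proof.
move=> /andP [d0 /allP H].
rewrite {1}(prod_prime_decomp d0) prime_decompE big_map /=.
apply: eq_big_seq => p pd.
have h1 := H p pd.
have h2 : 0 < logn p d by rewrite logn_gt0.
have -> : logn p d = 1 by lia.
by rewrite expn1.
Qed.

Lemma prod_primes_le (n : nat) : 0 < n -> \prod_(p <- primes n) p <= n.
Proof.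
move=> n0.
rewrite {2}(prod_prime_decomp n0) prime_decompE big_map /=.
rewrite big_seq_cond [X in _ <= X]big_seq_cond.
apply: leq_prod => p /andP [pn _].
have h2 : 0 < logn p n by rewrite logn_gt0.
have pp : 0 < p by move: pn; rewrite mem_primes => /andP [/prime_gt0 ->].
by rewrite -{1}(expn1 p) leq_pexp2l.
Qed.

Lemma W_le (n : nat) : 0 < n -> W n <= 2 ^ size (primes n).
Proof.
move=> n0.
set D := [seq d <- divisors n | squarefree d].
pose f (d : nat) : {set 'I_n.+1} := [set i : 'I_n.+1 | val i \in primes d].
pose S : {set 'I_n.+1} := [set i : 'I_n.+1 | val i \in primes n].
have uD : uniq D by rewrite filter_uniq // divisors_uniq.
have Dsub : forall d, d \in D -> [/\ squarefree d, d %| n & 0 < d].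
  move=> d; rewrite mem_filter => /andP [sq]; rewrite -dvdn_divisors // => dn.
  split=> //; exact: dvdn_gt0 n0 dn.
have finj : {in D &, injective f}.
  move=> d1 d2 /Dsub [s1 h1 p1] /Dsub [s2 h2 p2] E.
  rewrite (sqf_prod d1 s1) (sqf_prod d2 s2).
  apply: perm_big; apply: uniq_perm; try exact: primes_uniq.
  have key : forall d, d %| n -> forall p, p \in primes d -> p < n.+1.
    move=> d dn p; rewrite mem_primes => /and3P [_ dp pd].
    rewrite ltnS; apply: dvdn_leq => //; exact: dvdn_trans pd dn.
  move=> p; apply/idP/idP => hp.
  - have hp' : p < n.+1 by exact: key d1 h1 p hp.
    have : Ordinal hp' \in f d1 by rewrite inE.
    by rewrite E inE.
  - have hp' : p < n.+1 by exact: key d2 h2 p hp.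
    have : Ordinal hp' \in f d2 by rewrite inE.
    by rewrite -E inE.
have uM : uniq (map f D) by rewrite map_inj_in_uniq.
rewrite /W -/D -(size_map f).
apply: leq_trans (_ : #|powerset S| <= _).
  rewrite -(card_uniqP uM); apply: subset_leq_card; apply/subsetP => X.
  move/mapP=> [d dD ->]; rewrite powersetE; apply/subsetP => i; rewrite !inE.
  have [_ dn d0] := Dsub d dD.
  rewrite !mem_primes => /and3P [pi _ id]; rewrite pi n0 /=.
  exact: dvdn_trans id dn.
rewrite card_powerset leq_exp2l //.
rewrite cardE -(size_map val); apply: uniq_leq_size.
  rewrite map_inj_uniq ?enum_uniq //; exact: val_inj.
by move=> x /mapP [i]; rewrite mem_enum inE => h ->.
Qed.

Lemma cnt_small : all (fun i => count prime (iota 0 (g i)) <= i) (iota 0 60).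
Proof. by vm_compute. Qed.

Lemma g_small : all (fun i => 3 * i.-1 <= g i) (iota 0 60).
Proof. by vm_compute. Qed.

Lemma g_big i : 60 <= i -> g i = 3 * i.-1.
Proof. by move=> hi; rewrite /g nth_default. Qed.

Lemma g_ge i : 3 * i.-1 <= g i.
Proof.
case: (ltnP i 60) => hi; last by rewrite g_big.
by have /allP := g_small; apply; rewrite mem_iota.
Qed.

Lemma cnt_big m : 2 <= m -> count prime (iota 0 (3 * m)) <= m.+1.
Proof.
elim: m => // m IH hm.
case: (ltnP m 2) => h2.
  have -> : m = 1 by lia.
  by vm_compute.
have {}IH := IH h2.
have -> : 3 * m.+1 = 3 * m + 3 by lia.
rewrite iotaD count_cat add0n /=.
have h0 : prime (3 * m) = false.
  apply/negP => pr.
  have := prime_nt_dvdP pr (d := 3) isT; rewrite dvdn_mulr // => /(_ isT); lia.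
have h12 : prime (3 * m).+1 && prime (3 * m).+2 = false.
  apply/negP => /andP [p1 p2].
  have [e1|o1] := even_prime p1; first lia.
  have [e2|o2] := even_prime p2; first lia.
  by move: o1 o2; rewrite !oddS; case: (odd (3 * m)).
rewrite h0 /=; move: h12; case: (prime (3 * m).+1); case: (prime (3*m).+2) => //= _; lia.
Qed.

Lemma cnt_all i : count prime (iota 0 (g i)) <= i.
Proof.
case: (ltnP i 60) => hi.
  by have /allP := cnt_small; apply; rewrite mem_iota.
rewrite g_big //.
have h : count prime (iota 0 (3 * i.-1)) <= i.-1.+1 by apply: cnt_big; lia.
apply: leq_trans h _; lia.
Qed.

Lemma count_primes_hyp n i : count (fun s => s < g i) (primes n) <= i.
Proof.
apply: leq_trans (cnt_all i).
rewrite -!size_filter; apply: uniq_leq_size.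
  by rewrite filter_uniq // primes_uniq.
move=> x; rewrite !mem_filter mem_iota => /andP [hx]; rewrite mem_primes => /and3P [px _ _].
by rewrite px hx.
Qed.

Lemma prod_g_le n : 0 < n -> \prod_(0 <= i < size (primes n)) g i <= n.
Proof.
move=> n0; apply: (leq_trans _ (prod_primes_le n n0)).
apply: prod_lb; first exact: primes_uniq.
exact: count_primes_hyp.
Qed.

Lemma prod_g_fact k : 2 <= k -> 3 ^ (k - 2) * (k - 2)`! <= \prod_(0 <= i < k) g i.
Proof.
elim: k => // k IH hk.
case: (ltnP k 2) => h2.
  have -> : k = 1 by lia.
  by rewrite unlock; vm_compute.
rewrite big_nat_recr //=.
have -> : k.+1 - 2 = (k - 2).+1 by lia.
rewrite expnS factS.
have := IH h2; have := g_ge k.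
have -> : (k - 2).+1 = k.-1 by lia.
move=> h1 h3.
have -> : 3 * 3 ^ (k - 2) * (k.-1 * (k - 2)`!) = (3 ^ (k - 2) * (k - 2)`!) * (3 * k.-1) by nia.
exact: leq_mul.
Qed.
Open Scope R_scope.
Lemma exp_low (y : R) : 0 <= y -> 1 + y + y^2/2 <= exp y.
Proof.
move=> hy.
have G : Un_growing (E1 y).
  move=> n; rewrite /E1; set f := fun k => _.
  change (sum_f_R0 f n <= sum_f_R0 f n + f (S n)).
  have : 0 <= f (S n).
    apply: Rmult_le_pos; [left; apply: Rinv_0_lt_compat; apply: lt_0_INR; apply: lt_O_fact|apply: pow_le; lra].
  lra.
have := growing_ineq (E1 y) (exp y) G (E1_cvg y) 2.
rewrite /E1 /= => H.
have E : 1 + y + y^2/2 = / 1 * 1 + / 1 * (y * 1) + / 2 * (y * (y * 1)) by field.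
rewrite E.
have -> : 2 = INR (1 + 1 * 1)%coq_nat by simpl; lra.
have -> : 1 = INR 1 by simpl; lra.
exact H.
Qed.

Lemma exp_up (y : R) : 0 <= y -> exp y * (2 - y) <= 2 + y.
Proof.
move=> hy.
case: (Req_dec y 0) => [->|hy0]; first by rewrite exp_0; lra.
have hlt : 0 < y by lra.
set h := fun z => 2 + z - (2 - z) * exp z.
have D : forall c, derivable_pt_lim h c (1 - (1 - c) * exp c).
  move=> c; rewrite /h.
  have -> : 1 - (1 - c) * exp c = (0 + 1) - ((0 - 1) * exp c + (2 - c) * exp c) by ring.
  apply: derivable_pt_lim_minus.
    apply: derivable_pt_lim_plus; [apply: derivable_pt_lim_const|apply: derivable_pt_lim_id].
  apply: derivable_pt_lim_mult; last by apply: derivable_pt_lim_exp.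
  apply: derivable_pt_lim_minus; [apply: derivable_pt_lim_const|apply: derivable_pt_lim_id].
have [c [Hc Hcr]] := MVT_cor2 h (fun c => 1 - (1 - c) * exp c) 0 y hlt (fun c _ => D c).
have h0 : h 0 = 0 by rewrite /h exp_0; ring.
have hc : 0 <= 1 - (1 - c) * exp c.
  have e1 := exp_ineq1_le (- c).
  have e2 : exp (-c) * exp c = 1 by rewrite -exp_plus; replace (-c + c) with 0 by ring; apply exp_0.
  have := exp_pos c. nra.
have : 0 <= h y by nra.
rewrite /h; lra.
Qed.

Lemma exp_nat_mul (m : nat) (y : R) : exp (INR m * y) = exp y ^ m.
Proof.
elim: m => [|m IH]; first by rewrite /= Rmult_0_l exp_0.
rewrite S_INR /= Rmult_plus_distr_r Rmult_1_l exp_plus IH; ring.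
Qed.


Lemma P2pos : 0 < IZR P2.
Proof. apply: IZR_lt; rewrite /P2; lia. Qed.

Lemma powU_spec x k : (0 <= x)%Z -> (IZR x / IZR P2) ^ k <= IZR (powU x k) / IZR P2.
Proof.
move=> hx; have hP := P2pos.
have hxr : 0 <= IZR x by apply: IZR_le.
elim: k => [|k IH].
  rewrite /=; right; field; lra.
rewrite /= Z.shiftr_div_pow2; last lia.
have -> : (2 ^ 32)%Z = P2 by reflexivity.
set U := powU x k in IH *.
have H := ceil_div_ge (U * x) P2 ltac:(rewrite /P2; lia).
have HR := IZR_le _ _ H; rewrite !mult_IZR in HR.
set q := ((U * x + P2 - 1) / P2)%Z in HR.
have -> : ((U * x + (P2 - 1)) / P2)%Z = q by rewrite /q; f_equal; lia.
apply: Rle_trans.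
  apply: Rmult_le_compat_l; last exact IH.
  apply: Rle_mult_inv_pos; lra.
have -> : IZR x / IZR P2 * (IZR U / IZR P2) = (IZR U * IZR x) * / (IZR P2 * IZR P2) by field; lra.
have -> : IZR q / IZR P2 = (IZR P2 * IZR q) * / (IZR P2 * IZR P2) by field; lra.
apply: Rmult_le_compat_r => //.
left; apply: Rinv_0_lt_compat; nra.
Qed.

Lemma powL_spec x k : (0 <= x)%Z -> IZR (powL x k) / IZR P2 <= (IZR x / IZR P2) ^ k.
Proof.
move=> hx; have hP := P2pos.
have hxr : 0 <= IZR x by apply: IZR_le.
elim: k => [|k IH].
  rewrite /=; right; field; lra.
rewrite /= Z.shiftr_div_pow2; last lia.
have -> : (2 ^ 32)%Z = P2 by reflexivity.
have hL0 := powL_nonneg x k hx.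
set U := powL x k in IH hL0 *.
have H := Z.mul_div_le (U * x) P2 ltac:(rewrite /P2; lia).
have HR := IZR_le _ _ H; rewrite !mult_IZR in HR.
set q := ((U * x) / P2)%Z in HR *.
apply: (Rle_trans _ (IZR x / IZR P2 * (IZR U / IZR P2))); last first.
  apply: Rmult_le_compat_l; last exact IH.
  apply: Rle_mult_inv_pos; lra.
have -> : IZR x / IZR P2 * (IZR U / IZR P2) = (IZR U * IZR x) * / (IZR P2 * IZR P2) by field; lra.
have -> : IZR q / IZR P2 = (IZR P2 * IZR q) * / (IZR P2 * IZR P2) by field; lra.
apply: Rmult_le_compat_r => //.
left; apply: Rinv_0_lt_compat; nra.
Qed.

Lemma okU_R a p : okU a p = true -> exp (IZR a / IZR DD) <= IZR p.
Proof.
rewrite /okU => /andP [/andP [/andP [/andP [h1 h2] h3] h4] h5].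
move/Z.leb_le: h1 => h1; move/Z.ltb_lt: h2 => h2; move/Z.leb_le: h3 => h3.
move/Z.leb_le: h4 => h4; move/Z.leb_le: h5 => h5.
have hP := P2pos.
have hD : 0 < IZR DD by apply: IZR_lt; rewrite /DD; lia.
have hM : 0 < INR MM by rewrite /MM; apply: lt_0_INR; lia.
have har : 0 <= IZR a by apply: IZR_le.
have hC : (0 < CU a)%Z by rewrite /CU; lia.
have hCr : 0 < IZR (CU a) by apply: IZR_lt.
set y := IZR a / (IZR DD * INR MM).
have hy0 : 0 <= y by rewrite /y; apply: Rle_mult_inv_pos => //; nra.
have hAC : IZR (AU a) = IZR (CU a) * ((2 + y) / (2 - y)).
  rewrite /AU /CU /y plus_IZR minus_IZR !mult_IZR -INR_IZR_INZ.
  have : IZR a < 2 * INR MM * IZR DD.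
    rewrite INR_IZR_INZ -!mult_IZR; apply: IZR_lt; lia.
  move=> hlt; field; split; [lra|nra].
have hy2 : y < 2.
  have : IZR a < 2 * INR MM * IZR DD by rewrite INR_IZR_INZ -!mult_IZR; apply: IZR_lt; lia.
  move=> hlt; rewrite /y; apply (Rmult_lt_reg_r (IZR DD * INR MM)); first nra.
  rewrite /Rdiv Rmult_assoc Rinv_l; nra.
have E : IZR a / IZR DD = INR MM * y by rewrite /y; field; lra.
rewrite E exp_nat_mul.
have Hy' : exp y <= (2 + y) / (2 - y).
  have := exp_up y hy0.
  move=> Hy; apply (Rmult_le_reg_r (2 - y)); first lra.
  rewrite /Rdiv Rmult_assoc Rinv_l; lra.
have Hx : (2 + y) / (2 - y) <= IZR (xU a) / IZR P2.
  have H4 := IZR_le _ _ h4; rewrite !mult_IZR hAC in H4.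
  apply (Rmult_le_reg_r (IZR P2 * IZR (CU a))); first nra.
  have -> : IZR (xU a) / IZR P2 * (IZR P2 * IZR (CU a)) = IZR (xU a) * IZR (CU a) by field; lra.
  lra.
apply: (Rle_trans _ ((IZR (xU a) / IZR P2) ^ MM)).
  apply: pow_incr; split; [left; exact: exp_pos|lra].
apply: (Rle_trans _ _ _ (powU_spec _ MM h3)).
have H5 := IZR_le _ _ h5; rewrite mult_IZR in H5.
apply (Rmult_le_reg_r (IZR P2)) => //.
rewrite /Rdiv Rmult_assoc Rinv_l; lra.
Qed.

Lemma okL_R a B E : okL a B E = true -> IZR B / IZR E < exp (IZR a / IZR DD).
Proof.
rewrite /okL => /andP [/andP [/andP [/andP [h1 h2] h3] h4] h5].
move/Z.leb_le: h1 => h1; move/Z.ltb_lt: h2 => h2; move/Z.leb_le: h3 => h3.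
move/Z.leb_le: h4 => h4; move/Z.ltb_lt: h5 => h5.
have hP := P2pos.
have hD : 0 < IZR DD by apply: IZR_lt; rewrite /DD; lia.
have hM : 0 < INR MM by rewrite /MM; apply: lt_0_INR; lia.
have har : 0 <= IZR a by apply: IZR_le.
have hEr : 0 < IZR E by apply: IZR_lt.
have hden : 0 < IZR denL by apply: IZR_lt; rewrite /denL /DD /MM; lia.
set y := IZR a / (IZR DD * INR MM).
have hy0 : 0 <= y by rewrite /y; apply: Rle_mult_inv_pos => //; nra.
have E1 : IZR a / IZR DD = INR MM * y by rewrite /y; field; lra.
rewrite E1 exp_nat_mul.
have Hy := exp_low y hy0.
have hnum : IZR (numL a) = IZR denL * (1 + y + y^2/2).
  rewrite /numL /denL /y !plus_IZR !mult_IZR -!INR_IZR_INZ; field; lra.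
have Hx : IZR (xL a) / IZR P2 <= 1 + y + y^2/2.
  have H4 := IZR_le _ _ h4; rewrite (mult_IZR (xL a) denL) (mult_IZR (numL a) P2) hnum in H4.
  apply (Rmult_le_reg_r (IZR P2 * IZR denL)); first nra.
  have -> : IZR (xL a) / IZR P2 * (IZR P2 * IZR denL) = IZR (xL a) * IZR denL by field; lra.
  have -> : (1 + y + y^2/2) * (IZR P2 * IZR denL) = IZR denL * (1 + y + y^2/2) * IZR P2 by ring.
  lra.
have hx0 : 0 <= IZR (xL a) / IZR P2 by apply: Rle_mult_inv_pos; [exact: IZR_le|lra].
have HL := powL_spec (xL a) MM h3.
move: HL h5; generalize (powL (xL a) MM) => Lp HL h5.
apply: (Rlt_le_trans _ (IZR Lp / IZR P2)).
  have H5 := IZR_lt _ _ h5; rewrite !mult_IZR in H5.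
  apply (Rmult_lt_reg_r (IZR E * IZR P2)); first nra.
  have -> : IZR B / IZR E * (IZR E * IZR P2) = IZR B * IZR P2 by field; lra.
  have -> : IZR Lp / IZR P2 * (IZR E * IZR P2) = IZR E * IZR Lp by field; lra.
  exact H5.
apply: (Rle_trans _ _ _ HL).
apply: pow_incr; split => //; lra.
Qed.

Close Scope R_scope.

Open Scope R_scope.

Lemma ln_le' x y : 0 < x -> x <= y -> ln x <= ln y.
Proof. move=> hx [h|->]; [left; exact: ln_increasing|right; reflexivity]. Qed.

Lemma exp_le' x y : x <= y -> exp x <= exp y.
Proof. move=> [h|->]; [left; exact: exp_increasing|right; reflexivity]. Qed.

Lemma ln_div' x y : 0 < x -> 0 < y -> ln (x / y) = ln x - ln y.
Proof.
move=> hx hy; rewrite /Rdiv ln_mult ?ln_Rinv //; last exact: Rinv_0_lt_compat.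
Qed.

Lemma ln_le_sub1 y : 0 < y -> ln y <= y - 1.
Proof. move=> hy; have := exp_ineq1_le (ln y); rewrite exp_ln //; lra. Qed.

Lemma ln_lt_of x r : 0 < x -> x < exp r -> ln x < r.
Proof. move=> hx h; rewrite -(ln_exp r); exact: ln_increasing. Qed.

Lemma ln_ge_of x r : exp r <= x -> r <= ln x.
Proof. move=> h; rewrite -(ln_exp r); apply: ln_le' => //; exact: exp_pos. Qed.

Lemma INR_muln (a b : nat) : INR (a * b)%N = INR a * INR b.
Proof. exact: mult_INR. Qed.

Lemma INR_expn (a b : nat) : INR (a ^ b)%N = INR a ^ b.
Proof. elim: b => [|b IH] //=; rewrite expnS INR_muln IH //. Qed.

Lemma ln2_up : ln 2 < 6932 / 10000.
Proof.
have := okL_R _ _ _ ln2_ok; rewrite /DD => h.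
apply: ln_lt_of; first lra.
move: h; have -> : IZR 2 / IZR 1 = 2 by field. done.
Qed.

Lemma ln2_pos : 0 < ln 2.
Proof. rewrite -ln_1; apply: ln_increasing; lra. Qed.

Lemma expU_i i : (i < 60)%N -> exp (IZR (nth 0%Z As i) / IZR DD) <= INR (g i).
Proof.
move=> hi.
have H0 := checkU_ok.
have H := allP H0.
have := H i; rewrite mem_iota add0n => /(_ hi) h.
rewrite INR_IZR_INZ; exact: okU_R.
Qed.

Lemma exp_sumA k : (k <= 60)%N -> exp (IZR (sumA k) / IZR DD) <= INR (\prod_(0 <= i < k) g i).
Proof.
elim: k => [|k IH] hk.
  rewrite big_geq // /=; rewrite /Rdiv Rmult_0_l exp_0; lra.
rewrite big_nat_recr //= INR_muln plus_IZR /Rdiv Rmult_plus_distr_r exp_plus.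
apply: Rmult_le_compat.
- left; exact: exp_pos.
- left; exact: exp_pos.
- apply: IH; lia.
- apply: expU_i; lia.
Qed.

Lemma small_k k : (4 <= k)%N -> (k < 60)%N ->
  0 < IZR (sumA k) / IZR DD /\
  INR k * ln 2 * ln (IZR (sumA k) / IZR DD) < 96/100 * (IZR (sumA k) / IZR DD) /\
  INR k * ln 2 <= 96/100 * (IZR (sumA k) / IZR DD).
Proof.
move=> h4 h60.
have H0 := checkKs_ok.
have H := allP H0.
have := H k; rewrite mem_iota => /(_ ltac:(apply/andP; split; lia)).
rewrite /checkK => /andP [/andP [hL h1] h2].
move/Z.ltb_lt: h1 => h1; move/Z.leb_le: h2 => h2.
have hb := okL_R _ _ _ hL.
move: h1 h2 hb; set S := sumA k; set c := nth 0%Z Cs k; rewrite /DD => h1 h2 hb.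
have hk : 4 <= INR k by have := le_INR 4 k ltac:(apply/leP; lia); rewrite /=; lra.
have hc0 : (0 <= c)%Z by move: hL; rewrite /okL => /andP [/andP [/andP [/andP [/Z.leb_le ? _] _] _] _].
have hc : 0 <= IZR c by apply: IZR_le.
have R1 : IZR (100 * Z.of_nat k * 6932 * c) < IZR (96 * S * 10000) by apply: IZR_lt.
have R2 : IZR (100 * Z.of_nat k * 6932) <= IZR (96 * S) by apply: IZR_le.
rewrite !mult_IZR -INR_IZR_INZ in R1 R2.
have hS : 0 < IZR S by nra.
have hbpos : 0 < IZR S / 10000 by lra.
split; first done.
have hl := ln2_up; have hl0 := ln2_pos.
have hlb : ln (IZR S / 10000) < IZR c / 10000 by apply: ln_lt_of.
split; last by nra.
have e1 : INR k * ln 2 * ln (IZR S / 10000) <= INR k * ln 2 * (IZR c / 10000).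
  apply: Rmult_le_compat_l; [nra|lra].
have e2 : INR k * ln 2 * (IZR c / 10000) <= INR k * (6932/10000) * (IZR c / 10000).
  apply: Rmult_le_compat_r; first lra.
  apply: Rmult_le_compat_l; lra.
nra.
Qed.

Ltac zle := apply (proj1 (Z.leb_le _ _)); vm_compute; reflexivity.
Ltac zlt := apply (proj1 (Z.ltb_lt _ _)); vm_compute; reflexivity.

Lemma ending (n k : nat) : (2 <= n)%N ->
  INR k * ln 2 * ln (ln (INR n.+1)) < 96/100 * ln (INR n.+1) ->
  INR (2 ^ k)%N < Rpower (INR n.+1) (96/100 / ln (ln (INR n.+1))).
Proof.
move=> hn H.
have hN : 3 <= INR n.+1 by rewrite S_INR; have := le_INR 2 n ltac:(apply/leP; lia); rewrite /=; lra.
have e3 := okU_R _ _ ok5.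
have hL0 : IZR 10500 / IZR DD <= ln (INR n.+1) by apply: ln_ge_of; lra.
have hL : 21/20 <= ln (INR n.+1) by move: hL0; rewrite /DD; lra.
have hlL : 0 < ln (ln (INR n.+1)) by rewrite -ln_1; apply: ln_increasing; lra.
rewrite INR_expn /Rpower.
have I2 : INR 2 = 2 by simpl; lra.
have -> : INR 2 ^ k = exp (INR k * ln 2) by rewrite I2 exp_nat_mul exp_ln //; lra.
apply: exp_increasing.
set L := ln (INR n.+1) in H hL hlL *.
set LL := ln L in H hlL *.
apply (Rmult_lt_reg_r LL) => //.
have -> : 96 / 100 / LL * L * LL = 96/100 * L by field; lra.
exact H.
Qed.

Lemma tiny_k (n k : nat) : (2 <= n)%N -> (k <= 3)%N ->
  INR (2 ^ k)%N < Rpower (INR n.+1) (96/100 / ln (ln (INR n.+1))).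
Proof.
move=> hn hk; apply: ending => //.
have hN : 3 <= INR n.+1 by rewrite S_INR; have := le_INR 2 n ltac:(apply/leP; lia); rewrite /=; lra.
have e3 := okU_R _ _ ok5.
have hL0 : IZR 10500 / IZR DD <= ln (INR n.+1) by apply: ln_ge_of; lra.
have hL : 21/20 <= ln (INR n.+1) by move: hL0; rewrite /DD; lra.
set L := ln (INR n.+1) in hL *.
have he : 5/2 <= exp 1 by have := exp_low 1 ltac:(lra); lra.
have hlL : ln L <= L / exp 1.
  have := ln_le_sub1 (L / exp 1) ltac:(apply: Rdiv_lt_0_compat; [lra|exact: exp_pos]).
  rewrite ln_div' ?ln_exp; [lra|lra|exact: exp_pos].
have hlL2 : ln L <= L * (2/5).
  change (ln L <= L * / exp 1) in hlL.
  have hinv : / exp 1 <= / (5/2) by apply: Rinv_le_contravar; lra.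
  have -> : 2/5 = / (5/2) by field.
  apply: (Rle_trans _ _ _ hlL); apply: Rmult_le_compat_l; lra.
have hlL0 : 0 < ln L by rewrite -ln_1; apply: ln_increasing; lra.
have hk3 : INR k <= 3 by have := le_INR k 3 ltac:(apply/leP; lia); rewrite /=; lra.
have hl := ln2_up; have hl0 := ln2_pos.
have hK : INR k * ln 2 <= 3 * (6932/10000).
  apply: Rmult_le_compat; [exact: pos_INR|lra|lra|lra].
have hK0 : 0 <= INR k * ln 2 by apply: Rmult_le_pos; [exact: pos_INR|lra].
apply: (Rle_lt_trans _ (3 * (6932/10000) * (L * (2/5)))).
  apply: Rmult_le_compat; lra.
lra.
Qed.

Lemma final_step (n k : nat) (b : R) : (2 <= n)%N -> 0 < b -> exp b <= INR n ->
  INR k * ln 2 * ln b < 96/100 * b -> INR k * ln 2 <= 96/100 * b ->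
  INR (2 ^ k)%N < Rpower (INR n.+1) (96/100 / ln (ln (INR n.+1))).
Proof.
move=> hn hb heb H1 H2; apply: ending => //.
have hn0 : 0 < INR n by have := le_INR 2 n ltac:(apply/leP; lia); rewrite /=; lra.
have hbn : b <= ln (INR n) by apply: ln_ge_of.
have hnL : ln (INR n) < ln (INR n.+1) by apply: ln_increasing => //; rewrite S_INR; lra.
set L := ln (INR n.+1) in hnL *.
set K := INR k * ln 2 in H1 H2 *.
have hK0 : 0 <= K by apply: Rmult_le_pos; [exact: pos_INR|left; exact: ln2_pos].
have hLb : b < L by lra.
have h1 : ln L <= ln b + (L / b - 1).
  have := ln_le_sub1 (L / b) ltac:(apply: Rdiv_lt_0_compat; lra).
  rewrite ln_div'; lra.
have h2 : K * ln L <= K * ln b + K * (L / b - 1).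
  rewrite -Rmult_plus_distr_l; exact: Rmult_le_compat_l.
set q := L / b in h1 h2.
have hq : L = q * b by rewrite /q; field; lra.
have hq1 : 1 <= q.
  rewrite /q; apply (Rmult_le_reg_r b) => //; rewrite /Rdiv Rmult_assoc Rinv_l; lra.
have h3 : K * (q - 1) <= 96/100 * b * (q - 1) by apply: Rmult_le_compat_r; lra.
have e4 : 96/100 * b + 96/100 * b * (q - 1) = 96/100 * L by rewrite hq; ring.
lra.
Qed.

Lemma ln_fact (j : nat) : (1 <= j)%N -> INR j * ln (INR j) - INR j <= ln (INR (j`!)).
Proof.
elim: j => // j IH hj.
case: (ltnP j 1) => h1.
  have -> : j = 0%N by lia.
  rewrite /= ln_1; lra.
have {}IH := IH h1.
have hj0 : 1 <= INR j by have := le_INR 1 j ltac:(apply/leP; lia); rewrite /=; lra.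
rewrite factS INR_muln ln_mult; last first.
  have := lt_INR 0 (j`!) ltac:(apply/ltP; exact: fact_gt0); rewrite /=; lra.
  rewrite S_INR; lra.
rewrite S_INR.
have hd : ln (INR j + 1) - ln (INR j) <= 1 / INR j.
  have := ln_le_sub1 ((INR j + 1) / INR j) ltac:(apply: Rdiv_lt_0_compat; lra).
  rewrite ln_div'; try lra.
  have -> : (INR j + 1) / INR j - 1 = 1 / INR j by field; lra.
  done.
have hd' : INR j * (ln (INR j + 1) - ln (INR j)) <= 1.
  have hh : INR j * (ln (INR j + 1) - ln (INR j)) <= INR j * (1 / INR j) by apply: Rmult_le_compat_l; lra.
  have e5 : INR j * (1 / INR j) = 1 by field; lra.
  lra.
nra.
Qed.


Lemma large_k (j : nat) : (58 <= j)%N ->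
  0 < INR j * ln 3 + (INR j * ln (INR j) - INR j) /\
  exp (INR j * ln 3 + (INR j * ln (INR j) - INR j)) <= INR (3 ^ j * j`!)%N /\
  INR j.+2 * ln 2 * ln (INR j * ln 3 + (INR j * ln (INR j) - INR j))
     < 96/100 * (INR j * ln 3 + (INR j * ln (INR j) - INR j)) /\
  INR j.+2 * ln 2 <= 96/100 * (INR j * ln 3 + (INR j * ln (INR j) - INR j)).
Proof.
move=> hj.
have hJ : 58 <= INR j by have := le_INR 58 j ltac:(apply/leP; lia); rewrite INR_IZR_INZ /=; lra.
have l3lo : 10985/10000 <= ln 3.
  apply: ln_ge_of; exact: (okU_R _ _ ok1).
have l3up : ln 3 < 11/10.
  apply: ln_lt_of; first lra.
  have := okL_R _ _ _ ok2; rewrite /DD => h.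
  have e1 : IZR 3 / IZR 1 = 3 by field.
  have e2 : IZR 11000 / IZR 10000 = 11/10 by field.
  by rewrite -e1 -e2.
have l41 : ln (41/10) < 1412/1000.
  apply: ln_lt_of; first lra.
  have := okL_R _ _ _ ok3; rewrite /DD => h.
  have e2 : IZR 14120 / IZR 10000 = 1412/1000 by field.
  by rewrite -e2.
have e4 : exp 4 <= 58.
  have := okU_R _ _ ok4; rewrite /DD.
  have e2 : IZR 40000 / IZR 10000 = 4 by field.
  by rewrite e2.
have hu : 4 <= ln (INR j) by apply: ln_ge_of; lra.
have hl := ln2_up; have hl0 := ln2_pos.
set J := INR j in hJ hu *.
set u := ln J in hu *.
have eb : J * ln 3 + (J * u - J) = J * (u + (ln 3 - 1)) by ring.
rewrite eb.
have hb : 0 < J * (u + (ln 3 - 1)) by nra.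
split; first done.
split.
  rewrite -eb exp_plus INR_muln.
  apply: Rmult_le_compat.
  - left; exact: exp_pos.
  - left; exact: exp_pos.
  - have I3 : INR 3 = 3 by simpl; lra.
    rewrite INR_expn exp_nat_mul exp_ln; last lra.
    rewrite I3; right; reflexivity.
  - have hf := ln_fact j ltac:(lia).
    have hpos : 0 < INR (j`!) by have := lt_INR 0 (j`!) ltac:(apply/ltP; exact: fact_gt0); rewrite /=; lra.
    rewrite -(exp_ln (INR (j`!))) //; exact: exp_le'.
have hJ2 : INR j.+2 = J + 2 by rewrite !S_INR -/J; lra.
rewrite hJ2.
have hc0 : 0 < u + (ln 3 - 1) by lra.
have hlb : ln (J * (u + (ln 3 - 1))) = u + ln (u + (ln 3 - 1)) by rewrite ln_mult //; lra.
have hlc : ln (u + (ln 3 - 1)) <= ln (41/10) + (u + (ln 3 - 1)) / (41/10) - 1.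
  have := ln_le_sub1 ((u + (ln 3 - 1)) / (41/10)) ltac:(apply: Rdiv_lt_0_compat; lra).
  rewrite ln_div'; lra.
have hY : ln (J * (u + (ln 3 - 1))) <= u + 1412/1000 + (u + 1/10) * (10/41) - 1.
  rewrite hlb; lra.
have hY0 : 0 <= ln (J * (u + (ln 3 - 1))).
  rewrite -ln_1; apply: ln_le'; [lra|nra].
split; last by nra.
set Y := ln (J * (u + (ln 3 - 1))) in hY hY0 *.
have s1 : (J + 2) * ln 2 * Y <= (J + 2) * (6932/10000) * Y.
  apply: Rmult_le_compat_r => //; apply: Rmult_le_compat_l; lra.
have s2 : (J + 2) * (6932/10000) * Y <= (J + 2) * (6932/10000) * (u + 1412/1000 + (u + 1/10) * (10/41) - 1).
  apply: Rmult_le_compat_l; lra.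
have s3 : 0 <= (J - 58) * (u - 4) by apply: Rmult_le_pos; lra.
have s4 : J * (u + 985/10000) <= J * (u + (ln 3 - 1)) by apply: Rmult_le_compat_l; lra.
nra.
Qed.

Close Scope R_scope.

Theorem lemma2p4 (t : nat) (ht : 3 <= t) :
  (INR (W (t - 1)) < Rpower (INR t) ((96 / 100) / ln (ln (INR t))))%R.
Proof.
have [n tn] : exists n, t = n.+1 by exists t.-1; lia.
rewrite tn.
have -> : n.+1 - 1 = n by lia.
have hn : 2 <= n by lia.
set k := size (primes n).
have hW : (INR (W n) <= INR (2 ^ k))%R by apply: le_INR; apply/leP; apply: W_le; lia.
apply: Rle_lt_trans hW _.
have hprod : \prod_(0 <= i < k) g i <= n by apply: prod_g_le; lia.
have hprodR : (INR (\prod_(0 <= i < k) g i) <= INR n)%R by apply: le_INR; apply/leP.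
case: (leqP k 3) => hk3; first exact: tiny_k.
case: (ltnP k 60) => hk60.
  have [hb [H1 H2]] := small_k k hk3 hk60.
  apply: (final_step n k _ hn hb _ H1 H2).
  apply: Rle_trans hprodR; apply: exp_sumA; lia.
have [j kj] : exists j, k = j.+2 by exists k.-2; lia.
rewrite kj.
have [hb [he [H1 H2]]] := large_k j ltac:(lia).
apply: (final_step n j.+2 _ hn hb _ H1 H2).
apply: (Rle_trans _ _ _ he); apply: Rle_trans hprodR.
apply: le_INR; apply/leP.
have := prod_g_fact k ltac:(lia); rewrite kj.
by have -> : j.+2 - 2 = j by lia.
Qed.
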